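(* The values of $h$ satisfy $(h(1),h(2),\dots,h(8))=(0,1,1,1,2,2,1,1)$, and for every integer $n>8$: $h(n)=h(n/2)$ if $n\equiv0\pmod 4$; $h(n)=h(n/2)+1$ if $n\equiv 2\pmod 4$; $h(n)=h((n+1)/2)$ if $n\equiv1\pmod 8$; $h(n)=h((n-1)/2)+1$ if $n\equiv 3\pmod 8$; $h(n)=h((n+1)/2)+1$ if $n\equiv5\pmod 8$; $h(n)=h((n-1)/2)$ if $n\equiv 7\pmod 8$.
   Context: For $k\ge0$ and $0\le m<2^k$ let $\beta_k(m)\in\{0,1\}^k$ be the point whose $j$-th coordinate is the binary digit of $m$ of weight $2^{k-j}$. For $n\ge2$ with $k=\lceil\log_2 n\rceil$, a pair $(n_0,n_1)$ of integers with $n=n_0+n_1$, $n_0\ge n_1\ge1$ is a hypercubic bipartition (HCBP) of $n$ if for some $i\in\{1,\dots,k\}$ the hyperplane $x_i=1/2$ splits the points $\beta_k(0),\dots,\beta_k(n-1)$ into $n_0$ points on one side and $n_1$ on the other. For $n\ge2$, $h(n)$ is the number of HCBPs of $n$, and $h(1)=0$. *)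

(* Defs.v *)
From mathcomp Require Import all_boot.
Set Implicit Arguments. Unset Strict Implicit. Unset Printing Implicit Defensive.

(* k = ceil(log2 n): up_log 2 n is the smallest e with n <= 2^e. *)
Definition klog (n : nat) : nat := up_log 2 n.

(* j-th coordinate (1 <= j <= k) of beta_k(m): binary digit of m of weight 2^(k-j). *)
Definition beta_coord (k m j : nat) : bool := odd (m %/ 2 ^ (k - j)).

Definition side0 (n j : nat) : nat :=
  count (fun m => ~~ beta_coord (klog n) m j) (iota 0 n).
Definition side1 (n j : nat) : nat :=
  count (fun m => beta_coord (klog n) m j) (iota 0 n).

Definition is_hcbp (n n0 n1 : nat) : bool :=
  [&& 2 <= n, n0 + n1 == n, n1 <= n0, 1 <= n1 &
   [exists j : 'I_(klog n),
      ((side0 n j.+1 == n0) && (side1 n j.+1 == n1))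
   || ((side0 n j.+1 == n1) && (side1 n j.+1 == n0))]].

Definition h (n : nat) : nat :=
  if n < 2 then 0
  else #|[set p : 'I_n.+1 * 'I_n.+1 | is_hcbp n p.1 p.2]|.

(* Main.v *)
Require Import Defs.
From mathcomp Require Import all_boot zify.
Set Implicit Arguments. Unset Strict Implicit. Unset Printing Implicit Defensive.

Lemma odd_div n P : 0 < P -> odd (n %/ P) = (P <= n %% (P*2)).
Proof.
move=> P0.
have P20 : 0 < P * 2 by rewrite muln_gt0 P0.
have E : n = (n %/ (P*2) * 2) * P + n %% (P*2) by rewrite -mulnA (mulnC 2 P) -divn_eq.
rewrite {1}E divnMDl // oddD oddM /= andbF /=.
have lt := ltn_pmod n P20.
case: (ltnP (n %% (P*2)) P) => h.
  by rewrite divn_small.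
rewrite -(subnKC h) divnDl ?dvdnn // divnn P0 divn_small /=; first by [].
lia.
Qed.

Lemma cnt_side1 P n : 0 < P ->
  count (fun m => odd (m %/ P)) (iota 0 n) = n %/ (P*2) * P + (n %% (P*2) - P).
Proof.
move=> P0.
have P20 : 0 < P * 2 by rewrite muln_gt0 P0.
elim: n => [|n IH]; first by rewrite div0n mod0n.
rewrite -addn1 iotaD count_cat IH /= add0n addn0 odd_div // addn1.
rewrite divnS // modnS.
have lt := ltn_pmod n P20.
have := divn_eq n.+1 (P*2).
rewrite divnS // modnS.
have e := divn_eq n (P*2).
case: (P * 2 %| n.+1) => /=; lia.
Qed.

Definition D n e := minn (n %% 2^e) (2^e - n %% 2^e).
Definition cnd n f := (2^f < n %% 2^f.+2) && (n %% 2^f.+2 < 3 * 2^f).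
Definition H n := count (cnd n) (iota 0 n).

Lemma mod_split n P : 0 < P -> let r2 := n %% (P * 4) in
  (n %% (P*2) = r2 /\ r2 < P * 2) \/ (n %% (P*2) = r2 - P*2 /\ P*2 <= r2 /\ r2 < P*4).
Proof.
move=> P0 /=.
have e : n %% (P*2) = (n %% (P*4)) %% (P*2).
  by rewrite modn_dvdm //; apply: dvdn_mul.
have lt : n %% (P*4) < P*4 by rewrite ltn_pmod // muln_gt0 P0.
rewrite e.
case: (ltnP (n %% (P*4)) (P*2)) => h.
  by left; rewrite modn_small.
right; split; last by [].
rewrite -{1}(subnKC h) -{1}(mul1n (P*2)) modnMDl modn_small //; lia.
Qed.

Lemma D_step n f : D n f.+1 <= D n f.+2 /\ (D n f.+1 < D n f.+2) = cnd n f.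
Proof.
have P0 : 0 < 2^f by rewrite expn_gt0.
rewrite /D /cnd.
have -> : 2^f.+1 = 2^f * 2 by rewrite expnSr.
have -> : 2^f.+2 = 2^f * 4 by rewrite !expnSr -mulnA.
have := mod_split n P0 => /=.
move: (n %% (2^f * 4)) => r.
case=> [[-> h]|[-> [h1 h2]]]; split; try lia; apply/idP/idP; lia.
Qed.

Lemma D_odd n e : 0 < e -> odd (D n e) = odd n.
Proof.
case: e => // e _.
rewrite /D expnS.
have P0 : 0 < 2 ^ e by rewrite expn_gt0.
have := ltn_pmod n (_ : 0 < 2 * 2^e).
have e1 : odd n = odd (n %% (2 * 2^e)).
  by rewrite {1}(divn_eq n (2*2^e)) oddD !oddM /= andbF.
rewrite e1.
move: (n %% (2 * 2^e)) => r.
rewrite muln_gt0 P0 /= => /(_ isT) lt.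
have [h|h] := boolP (r <= 2 * 2^e - r).
  by have -> : minn r (2 * 2 ^ e - r) = r by lia.
have -> : minn r (2 * 2 ^ e - r) = 2 * 2 ^ e - r by lia.
rewrite oddB ?oddM /=; first by []. 
lia.
Qed.

Lemma D_le n b : D n b.+1 <= 2^b.
Proof.
rewrite /D expnS.
have P0 : 0 < 2 ^ b by rewrite expn_gt0.
have := ltn_pmod n (_ : 0 < 2 * 2^b).
rewrite muln_gt0 P0 /= => /(_ isT).
move: (n %% (2 * 2^b)) => r; lia.
Qed.

Lemma undup_asc (f : nat -> nat) a K : (forall i, f i <= f i.+1) ->
  size (undup [seq f i | i <- iota a K.+1]) = (count (fun i => f i < f i.+1) (iota a K)).+1.
Proof.
move=> mono.
have hm : {homo f : i j / i <= j >-> i <= j}.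
  exact: (homo_leq leqnn (fun y x z => @leq_trans y x z) mono).
elim: K a => [|K IH] a; first by [].
have U : forall x (s : seq nat), undup (x :: s) = if x \in s then undup s else x :: undup s by [].
have -> : iota a K.+2 = a :: iota a.+1 K.+1 by [].
have -> : iota a K.+1 = a :: iota a.+1 K by [].
rewrite map_cons U.
have C : forall (p : pred nat) x s, count p (x :: s) = p x + count p s by [].
rewrite C.
case: (ltnP (f a) (f a.+1)) => h.
  have -> : (f a \in [seq f i | i <- iota a.+1 K.+1]) = false.
    apply/negbTE/mapP => [[i]]; rewrite mem_iota => /andP[hi _] e.
    have := hm _ _ hi; lia.
  by rewrite /= IH.
have -> : (f a \in [seq f i | i <- iota a.+1 K.+1]).
  apply/mapP; exists a.+1; first by rewrite mem_iota; apply/andP; split; lia.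
  by apply/eqP; rewrite eqn_leq h mono.
by rewrite IH.
Qed.

Definition vals n := [seq D n b.+1 | b <- iota 0 (klog n)].

Lemma klog_bounds n : 1 < n -> 2 ^ (klog n).-1 < n <= 2 ^ klog n /\ 0 < klog n.
Proof.
move=> n1; split; first exact: (up_log_bounds (p:=2) (n:=n)).
by rewrite /klog up_log_gt0 n1.
Qed.

Lemma cnd_small n f : 1 < n -> klog n <= f -> cnd n f = false.
Proof.
move=> n1 hf; have [/andP[_ hb] _] := klog_bounds n1.
apply/negbTE; rewrite /cnd negb_and -leqNgt.
have : 2 ^ klog n <= 2 ^ f by rewrite leq_exp2l.
have := leq_mod n (2 ^ f.+2).
lia.
Qed.

Lemma size_undup_vals n : 1 < n -> size (undup (vals n)) = H n.
Proof.
move=> n1; have [/andP[ha hb] k0] := klog_bounds n1.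
rewrite /vals /H.
move: ha hb k0; case E: (klog n) => [|k] //= ha hb _.
rewrite (undup_asc (f := fun i => D n i.+1) 0 k); last by move=> i; case: (D_step n i).
rewrite (eq_count (a2 := cnd n)); last by move=> i; case: (D_step n i).
have kn : k.+1 <= n.
  have := ltn_expl k (isT : 1 < 2); lia.
have -> : iota 0 n = iota 0 k.+1 ++ iota k.+1 (n - k.+1) by rewrite -iotaD subnKC.
rewrite count_cat.
rewrite (eq_in_count (a1 := cnd n) (a2 := pred0) (s := iota k.+1 _)); last first.
  by move=> f; rewrite mem_iota => /andP[hf _]; rewrite cnd_small // E.
have -> : iota 0 k.+1 = iota 0 k ++ [:: k] by rewrite -addn1 iotaD.
rewrite count_pred0 addn0 count_cat /= addn0.
have -> : cnd n k.
  rewrite /cnd modn_small; last first.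
    by apply: (leq_ltn_trans hb); rewrite ltn_exp2l.
  rewrite ha /=; move: hb; rewrite expnS; lia.
by rewrite addnC.
Qed.

Lemma side_D n b : let s1 := count (fun m => odd (m %/ 2^b)) (iota 0 n) in
  s1 <= n /\ maxn (n - s1) s1 - minn (n - s1) s1 = D n b.+1.
Proof.
have P0 : 0 < 2 ^ b by rewrite expn_gt0.
rewrite /= cnt_side1 // /D expnSr.
have lt : n %% (2^b * 2) < 2^b * 2 by rewrite ltn_pmod // muln_gt0 P0.
have En := divn_eq n (2^b*2).
move: En lt; rewrite mulnA.
move: (n %/ (2 ^ b * 2) * 2 ^ b) (n %% (2 ^ b * 2)) => Q r.
move: (2^b) P0 => P P0 En lt.
rewrite En; split; lia.
Qed.

Lemma side1E n j : side1 n j = count (fun m => odd (m %/ 2^(klog n - j))) (iota 0 n).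
Proof. by []. Qed.

Lemma side0E n j : side0 n j = n - side1 n j.
Proof.
have := count_predC (fun m => beta_coord (klog n) m j) (iota 0 n).
rewrite size_iota /side0 /side1 => h.
by rewrite -{3}h addKn.
Qed.

Lemma is_hcbp_iff n a c : 1 < n ->
  is_hcbp n a c = [&& a + c == n, c <= a & (a - c) \in vals n].
Proof.
move=> n1; have [/andP[ha hb] k0] := klog_bounds n1.
rewrite /is_hcbp n1 /=.
case: (boolP (a + c == n)) => //= /eqP hac.
case: (boolP (c <= a)) => //= hca.
apply/idP/idP.
- case/andP=> _ /existsP [j Cj].
  have [s1n hD] := side_D n (klog n - j.+1).
  move: Cj; rewrite !side0E !side1E.
  move: (count _ _) s1n hD => s1 s1n hD Cj.
  apply/mapP; exists (klog n - j.+1).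
    rewrite mem_iota add0n; apply/andP; split=> //; have := ltn_ord j; lia.
  rewrite -hD; move: Cj; case/orP => /andP[/eqP e1 /eqP e2]; lia.
- case/mapP => b; rewrite mem_iota add0n => /andP[_ hb'] e.
  have jk : klog n - b.+1 < klog n by lia.
  have hle := D_le n b.
  have h2 : 2 ^ b <= 2 ^ (klog n).-1 by rewrite leq_exp2l //; lia.
  apply/andP; split; first lia.
  apply/existsP; exists (Ordinal jk) => /=.
  have [s1n hD] := side_D n b.
  rewrite !side0E !side1E.
  have -> : klog n - (klog n - b.+1).+1 = b by lia.
  move: (count _ _) s1n hD => s1 s1n hD.
  case: (leqP s1 (n - s1)) => hs.
  + apply/orP; left; apply/andP; split; apply/eqP; lia.
  + apply/orP; right; apply/andP; split; apply/eqP; lia.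
Qed.

Lemma card_vals N (s : seq nat) : all (fun v => v < N) s ->
  #|[set x : 'I_N | val x \in s]| = size (undup s).
Proof.
move=> /allP hs.
rewrite cardE -(size_map val).
apply: perm_size; apply: uniq_perm.
- by rewrite (map_inj_uniq val_inj) enum_uniq.
- exact: undup_uniq.
move=> v; rewrite mem_undup; apply/mapP/idP.
- by case=> x; rewrite mem_enum inE => hx ->.
- move=> hv; exists (Ordinal (hs v hv)) => //.
  by rewrite mem_enum inE.
Qed.

Lemma vals_prop n v : 1 < n -> v \in vals n -> v < n /\ odd v = odd n.
Proof.
move=> n1; have [/andP[ha hb] k0] := klog_bounds n1.
case/mapP => b; rewrite mem_iota add0n => /andP[_ hb'] ->.
split; last exact: D_odd.
have hle := D_le n b.
have h2 : 2 ^ b <= 2 ^ (klog n).-1 by rewrite leq_exp2l //; lia.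
lia.
Qed.

Lemma h_vals n : 1 < n -> h n = size (undup (vals n)).
Proof.
move=> n1.
rewrite /h ltnNge n1 /=.
have -> : [set p : 'I_n.+1 * 'I_n.+1 | is_hcbp n p.1 p.2] =
          [set p : 'I_n.+1 * 'I_n.+1 | [&& p.1 + p.2 == n, p.2 <= p.1 & (p.1 - p.2) \in vals n]].
  by apply/setP => p; rewrite !inE is_hcbp_iff.
set A := [set p : 'I_n.+1 * 'I_n.+1 | _].
pose g := fun p : 'I_n.+1 * 'I_n.+1 => (inord (p.1 - p.2) : 'I_n.+1).
rewrite -(card_in_imset (f := g)); last first.
  move=> [x1 x2] [y1 y2]; rewrite !inE /= => /and3P[/eqP e1 l1 _] /and3P[/eqP e2 l2 _].
  move/(congr1 val); rewrite /g /= !inordK /=; try lia.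
  move=> e; have ex : x1 = y1 by apply: ord_inj; lia.
  have ey : x2 = y2 by apply: ord_inj; lia.
  by rewrite ex ey.
have -> : [set g x | x in A] = [set x : 'I_n.+1 | val x \in vals n].
  apply/setP => x; rewrite inE; apply/imsetP/idP.
  - case=> [[p1 p2]]; rewrite inE /= => /and3P[/eqP e1 l1 hv] ->.
    rewrite /g /= inordK //; lia.
  - move=> hx; have [vlt vodd] := vals_prop n1 hx.
    set v := val x in hx vlt vodd.
    set w := n - v.
    have ew : w = (w./2).*2.
      have := odd_double_half w; rewrite /w oddB ?vodd ?addbb //=; lia.
    have l1 : v + w./2 < n.+1 by lia.
    have l2 : w./2 < n.+1 by lia.
    exists (Ordinal l1, Ordinal l2).
      rewrite inE /=; apply/and3P; split; first (apply/eqP; lia); first lia.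
      by have -> : v + w./2 - w./2 = v by lia.
    apply: val_inj; rewrite /g /= inordK ?addnK //; lia.
apply: card_vals; apply/allP => v hv; have [vlt _] := vals_prop n1 hv; lia.
Qed.

Lemma h_H n : 1 < n -> h n = H n.
Proof. by move=> n1; rewrite h_vals // size_undup_vals. Qed.

Lemma pow2S f : 2 ^ f.+1 = 2 ^ f * 2. Proof. by rewrite expnSr. Qed.
Lemma pow2SS f : 2 ^ f.+2 = 2 ^ f * 4. Proof. by rewrite !expnSr -mulnA. Qed.
Lemma pow2SSS f : 2 ^ f.+3 = 2 ^ f * 8. Proof. by rewrite !expnSr -!mulnA. Qed.

Lemma mod_double q M : 0 < M -> q.*2 %% (M * 2) = (q %% M) * 2.
Proof.
move=> M0.
rewrite {1}(divn_eq q M) -muln2 mulnDl -mulnA modnMDl modn_small //.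
by rewrite ltn_mul2r /= ltn_pmod.
Qed.

Lemma mod_double1 q M : 0 < M -> q.*2.+1 %% (M * 2) = (q %% M) * 2 + 1.
Proof.
move=> M0.
rewrite {1}(divn_eq q M) -muln2 mulnDl -mulnA -addn1 -addnA modnMDl modn_small //.
have := ltn_pmod q M0; lia.
Qed.

Lemma odd_mod q M : ~~ odd M -> odd (q %% M) = odd q.
Proof.
move=> hM; rewrite {2}(divn_eq q M) oddD oddM (negbTE hM) andbF /=.
by [].
Qed.

Lemma cnd_even q f : cnd (q.*2) f.+1 = cnd q f.
Proof.
have P0 : 0 < 2 ^ f by rewrite expn_gt0.
rewrite /cnd pow2S pow2SSS.
have -> : 2 ^ f * 8 = (2 ^ f * 4) * 2 by rewrite -mulnA.
rewrite mod_double ?muln_gt0 ?P0 // pow2SS.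
move: (q %% (2 ^ f * 4)) (2 ^ f) => r P.
apply/idP/idP; lia.
Qed.

Lemma cnd_even0 q : cnd (q.*2) 0 = odd q.
Proof.
rewrite /cnd expn0.
have -> : 2 ^ 2 = 2 * 2 by [].
rewrite mod_double //.
have := odd_mod q (isT : ~~ odd 2).
have := ltn_pmod q (isT : 0 < 2).
move: (q %% 2) => r; case: (odd q) => ??; apply/idP/idP; lia.
Qed.

Lemma cnd_odd0 q : cnd (q.*2.+1) 0 = false.
Proof.
rewrite /cnd expn0.
have -> : 2 ^ 2 = 2 * 2 by [].
rewrite mod_double1 //.
apply/negbTE; lia.
Qed.

Lemma cnd_oddL q f : cnd (q.*2.+1) f.+1 =
  (2^f <= q %% 2^f.+2) && (q %% 2^f.+2 < 3 * 2^f).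
Proof.
have P0 : 0 < 2 ^ f by rewrite expn_gt0.
rewrite /cnd pow2S pow2SSS.
have -> : 2 ^ f * 8 = (2 ^ f * 4) * 2 by rewrite -mulnA.
rewrite mod_double1 ?muln_gt0 ?P0 // pow2SS.
move: (q %% (2 ^ f * 4)) (2 ^ f) => r P.
apply/idP/idP; lia.
Qed.

Lemma mod_succ q M : 0 < M ->
  (q.+1 %% M = (q %% M).+1 /\ (q %% M).+1 < M) \/ (q.+1 %% M = 0 /\ (q %% M).+1 = M).
Proof.
move=> M0.
have e : q.+1 %% M = (q %% M).+1 %% M by rewrite -[in LHS]addn1 -modnDml addn1.
have lt := ltn_pmod q M0.
case: (ltngtP (q %% M).+1 M) => h.
- by left; rewrite e modn_small.
- lia.
- by right; rewrite e h modnn.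
Qed.

Lemma cnd_oddR q f : cnd (q.*2.+1) f.+1 =
  (2^f < q.+1 %% 2^f.+2) && (q.+1 %% 2^f.+2 <= 3 * 2^f).
Proof.
rewrite cnd_oddL.
have P0 : 0 < 2 ^ f by rewrite expn_gt0.
have M0 : 0 < 2 ^ f.+2 by rewrite expn_gt0.
rewrite pow2SS in M0 *.
have := mod_succ q M0.
move: (q %% (2 ^ f * 4)) (q.+1 %% (2 ^ f * 4)) (2 ^ f) P0 => r r' P P0.
case=> [[-> h]|[-> h]]; apply/idP/idP; lia.
Qed.

Lemma cndL_eq q f : odd q -> 0 < f ->
  (2^f <= q %% 2^f.+2) && (q %% 2^f.+2 < 3 * 2^f) = cnd q f.
Proof.
move=> oq; case: f => // f _.
rewrite /cnd.
have ev : ~~ odd (2 ^ f.+1 * 4) by rewrite oddM andbF.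
have Pe : ~~ odd (2 ^ f.+1) by rewrite expnS oddM.
have := odd_mod q ev; rewrite oq -(pow2SS f.+1).
move: (q %% 2 ^ f.+3) (2 ^ f.+1) Pe => r P Pe or.
have [s es] : exists s, r = s.*2.+1.
  by exists r./2; have := odd_double_half r; rewrite or; lia.
have [t et] : exists t, P = t.*2.
  by exists P./2; have := odd_double_half P; rewrite (negbTE Pe); lia.
rewrite es et; apply/idP/idP; lia.
Qed.

Lemma cndR_eq q f : odd q -> 0 < f ->
  (2^f < q %% 2^f.+2) && (q %% 2^f.+2 <= 3 * 2^f) = cnd q f.
Proof.
move=> oq; case: f => // f _.
rewrite /cnd.
have ev : ~~ odd (2 ^ f.+1 * 4) by rewrite oddM andbF.
have Pe : ~~ odd (2 ^ f.+1) by rewrite expnS oddM.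
have := odd_mod q ev; rewrite oq -(pow2SS f.+1).
move: (q %% 2 ^ f.+3) (2 ^ f.+1) Pe => r P Pe or.
have [s es] : exists s, r = s.*2.+1.
  by exists r./2; have := odd_double_half r; rewrite or; lia.
have [t et] : exists t, P = t.*2.
  by exists P./2; have := odd_double_half P; rewrite (negbTE Pe); lia.
rewrite es et; apply/idP/idP; lia.
Qed.

Lemma cnd_odd_q0 q : odd q -> cnd q 0 = false.
Proof.
move=> oq; rewrite /cnd expn0.
have := odd_mod q (isT : ~~ odd (2^2)); rewrite oq.
have := ltn_pmod q (isT : 0 < 2^2).
move: (q %% 2^2) => r h1 h2; apply/negbTE.
have [s es] : exists s, r = s.*2.+1.
  by exists r./2; have := odd_double_half r; rewrite h2; lia.
rewrite es in h1 *; lia.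
Qed.

Lemma H_ext n K : n <= K -> count (cnd n) (iota 0 K) = H n.
Proof.
move=> nK; rewrite /H -(subnKC nK) iotaD count_cat add0n.
rewrite (eq_in_count (a2 := pred0) (s := iota n _)) ?count_pred0 ?addn0 //.
move=> f; rewrite mem_iota => /andP[hf _] /=; apply/negbTE.
rewrite /cnd negb_and -leqNgt.
have := ltn_expl f (isT : 1 < 2); have := leq_mod n (2 ^ f.+2); lia.
Qed.

Lemma count_iota0 (p1 p2 : pred nat) m : (forall f, 0 < f -> p1 f = p2 f) ->
  p2 0 = false -> count p1 (iota 0 m.+1) = p1 0 + count p2 (iota 0 m.+1).
Proof.
move=> e p20; rewrite /= p20 add0n; congr (_ + _).
apply: eq_in_count => f; rewrite mem_iota => /andP[hf _]; exact: e.
Qed.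

Lemma count_shift (p : pred nat) m : count p (iota 1 m) = count (fun f => p f.+1) (iota 0 m).
Proof. by rewrite -{1}(addn0 1) iotaDl count_map; apply: eq_count => f /=; rewrite add1n. Qed.

Lemma H_even q : 0 < q -> H (q.*2) = odd q + H q.
Proof.
move=> q0; rewrite {1}/H.
have -> : iota 0 q.*2 = 0 :: iota 1 q.*2.-1 by rewrite -[in LHS](@prednK q.*2) //; lia.
rewrite [count _ (_ :: _)]/= cnd_even0 count_shift.
rewrite (eq_count (a2 := cnd q)); last by move=> f; rewrite cnd_even.
by rewrite H_ext //; lia.
Qed.

Lemma H_odd_pre q : H (q.*2.+1) = count (fun f => cnd (q.*2.+1) f.+1) (iota 0 q.*2).
Proof.
rewrite /H -count_shift.
by rewrite [iota 0 _]/= [count _ (_ :: _)]/= cnd_odd0.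
Qed.

Lemma H_oddL q : odd q -> H (q.*2.+1) = (q %% 4 == 1) + H q.
Proof.
move=> oq.
have q0 : 0 < q by case: q oq.
rewrite H_odd_pre -(H_ext (K := q.*2)); last by lia.
have -> : iota 0 q.*2 = iota 0 (q.*2.-1).+1 by rewrite prednK //; lia.
rewrite (count_iota0 (p2 := cnd q)).
- congr (_ + _); rewrite cnd_oddL expn0.
  have := odd_mod q (isT : ~~ odd (2^2)); rewrite oq.
  have := ltn_pmod q (isT : 0 < 2^2).
  move: (q %% 2^2) => r h1 h2.
  have [s es] : exists s, r = s.*2.+1.
    by exists r./2; have := odd_double_half r; rewrite h2; lia.
  rewrite es in h1 *; clear es; by case: s h1 => [|[|s]].
- by move=> f f0 /=; rewrite cnd_oddL cndL_eq.
- exact: cnd_odd_q0.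
Qed.

Lemma H_oddR q : 0 < q -> odd q.+1 -> H (q.*2.+1) = (q.+1 %% 4 == 3) + H q.+1.
Proof.
move=> q0 oq.
rewrite H_odd_pre -(H_ext (K := q.*2)); last by lia.
have -> : iota 0 q.*2 = iota 0 (q.*2.-1).+1 by rewrite prednK //; lia.
rewrite (count_iota0 (p2 := cnd q.+1)).
- congr (_ + _); rewrite cnd_oddR expn0.
  have := odd_mod q.+1 (isT : ~~ odd (2^2)); rewrite oq.
  have := ltn_pmod q.+1 (isT : 0 < 2^2).
  move: (q.+1 %% 2^2) => r h1 h2.
  have [s es] : exists s, r = s.*2.+1.
    by exists r./2; have := odd_double_half r; rewrite h2; lia.
  rewrite es in h1 *; clear es; by case: s h1 => [|[|s]].
- by move=> f f0 /=; rewrite cnd_oddR cndR_eq.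
- exact: cnd_odd_q0.
Qed.

Lemma oddE x y : x = y.*2.+1 -> odd x.
Proof. by move=> ->; rewrite /= odd_double. Qed.
Lemma evenE x y : x = y.*2 -> odd x = false.
Proof. by move=> ->; rewrite odd_double. Qed.

Theorem corollary21 :
  (h 1 = 0 /\ h 2 = 1 /\ h 3 = 1 /\ h 4 = 1 /\ h 5 = 2 /\ h 6 = 2 /\
   h 7 = 1 /\ h 8 = 1) /\
  (forall n : nat, 8 < n ->
     (n %% 4 = 0 -> h n = h (n %/ 2)) /\
     (n %% 4 = 2 -> h n = (h (n %/ 2)).+1) /\
     (n %% 8 = 1 -> h n = h ((n + 1) %/ 2)) /\
     (n %% 8 = 3 -> h n = (h ((n - 1) %/ 2)).+1) /\
     (n %% 8 = 5 -> h n = (h ((n + 1) %/ 2)).+1) /\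
     (n %% 8 = 7 -> h n = h ((n - 1) %/ 2))).
Proof.
split.
  split; first by rewrite /h.
  by rewrite !h_H.
move=> n n8.
have hn : h n = H n by apply: h_H; lia.
rewrite hn.
split; [|split; [|split; [|split; [|split]]]] => hm.
- have Eq : n = (n %/ 2).*2 by lia.
  rewrite {1}Eq H_even; last by lia.
  rewrite (@evenE _ (n %/ 4)); last by lia.
  by rewrite h_H //; lia.
- have Eq : n = (n %/ 2).*2 by lia.
  rewrite {1}Eq H_even; last by lia.
  rewrite (@oddE _ (n %/ 4)); last by lia.
  by rewrite h_H //; lia.
- have Eq : n = (n %/ 2).*2.+1 by lia.
  rewrite {1}Eq H_oddR; first last.
    - by apply: (@oddE _ (n %/ 8).*2); lia.
    - lia.
  have -> : (n %/ 2).+1 %% 4 == 3 = false by apply/negbTE; lia.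
  have -> : (n + 1) %/ 2 = (n %/ 2).+1 by lia.
  by rewrite h_H //; lia.
- have Eq : n = (n %/ 2).*2.+1 by lia.
  rewrite {1}Eq H_oddL; last by apply: (@oddE _ (n %/ 8).*2); lia.
  have -> : (n %/ 2) %% 4 == 1 by apply/eqP; lia.
  have -> : (n - 1) %/ 2 = (n %/ 2) by lia.
  by rewrite h_H //; lia.
- have Eq : n = (n %/ 2).*2.+1 by lia.
  rewrite {1}Eq H_oddR; first last.
    - by apply: (@oddE _ (n %/ 8).*2.+1); lia.
    - lia.
  have -> : (n %/ 2).+1 %% 4 == 3 by apply/eqP; lia.
  have -> : (n + 1) %/ 2 = (n %/ 2).+1 by lia.
  by rewrite h_H //; lia.
- have Eq : n = (n %/ 2).*2.+1 by lia.
  rewrite {1}Eq H_oddL; last by apply: (@oddE _ (n %/ 8).*2.+1); lia.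
  have -> : (n %/ 2) %% 4 == 1 = false by apply/negbTE; lia.
  have -> : (n - 1) %/ 2 = (n %/ 2) by lia.
  by rewrite h_H //; lia.
Qed.
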